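(* Let $m\ge1$ and let $X\subset\sqrt{m}\,\mathbb{S}^{m-1}$ be a spherical $2$-design with $|X|=n$. Then $F_0=\frac1nJ$ and $F_1=G$.
   Context: $\sqrt{m}\,\mathbb{S}^{m-1}=\{\bm x\in\mathbb{R}^m:\bm x\cdot\bm x=m\}$. $X$ is a spherical $2$-design if the average over $X$ of every polynomial of degree at most $2$ equals its average over the sphere (equivalently $\sum_{\bm y\in X}\bm x\cdot\bm y=0$ and $\frac1n\sum_{\bm z\in X}(\bm x\cdot\bm z)(\bm z\cdot\bm y)=\bm x\cdot\bm y$ for all $\bm x,\bm y\in X$). $C(X)$: real functions on $X$ with $(f,g)=\frac1n\sum_{\bm x}f(\bm x)g(\bm x)$. $\zeta_{\bm a}(p)(\bm x)=p(\bm a\cdot\bm x)$. $\mathrm{Pol}_0(X)$ = constants, $\mathrm{Pol}_1(X)=\mathrm{Span}\{\zeta_{\bm a}(p):\bm a\in X,\deg p\le1\}$, $\mathrm{Pol}_k(X)=\mathrm{Span}\{fg:f\in\mathrm{Pol}_1(X),g\in\mathrm{Pol}_{k-1}(X)\}$. $S=\min\{i:\mathrm{Pol}_i(X)=C(X)\}$. $\mathrm{Harm}_0=\mathrm{Pol}_0$, $\mathrm{Harm}_k=\mathrm{Pol}_k\cap\mathrm{Pol}_{k-1}^\perp$ ($k\ge1$). Matrices indexed by $X\times X$ act on $C(X)$ by $(Mf)(\bm x)=\sum_{\bm y}M_{\bm x,\bm y}f(\bm y)$, and $F_i$ ($0\le i\le S$) is the matrix of the orthogonal projection onto $\mathrm{Harm}_i(X)$.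 $J$ is the all-ones matrix and $G=\frac1n(\bm x\cdot\bm y)_{\bm x,\bm y\in X}$. *)

(* Defs.v *)
From HB Require Import structures.
From mathcomp Require Import all_boot all_order all_algebra.
Set Implicit Arguments. Unset Strict Implicit. Unset Printing Implicit Defensive.
Import Order.TTheory GRing.Theory Num.Theory.
Local Open Scope ring_scope.

Definition dotv (R : ringType) (m : nat) (u v : 'rV[R]_m) : R :=
  \sum_(k < m) u 0 k * v 0 k.

(* Functions on X = {x_0,...,x_{n-1}} are row vectors 'rV_n; subspaces of
   C(X) are represented (mxalgebra style) by the row space of an n x n matrix. *)

Definition pmul (R : ringType) (n : nat) (u v : 'rV[R]_n) : 'rV[R]_n :=
  \row_k (u 0 k * v 0 k).

Definition zeta (R : ringType) (n m : nat) (x : 'I_n -> 'rV[R]_m) (a : 'I_n)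
  : 'rV[R]_n := \row_k dotv (x a) (x k).

Definition Pol0 (R : fieldType) (n : nat) : 'M[R]_n :=
  (<< (const_mx 1 : 'rV[R]_n) >>)%MS.

(* Pol_1(X) = Span{ zeta_a(p) : a in X, deg p <= 1 } = Span{1, zeta_a(id)} *)
Definition Pol1 (R : fieldType) (n m : nat) (x : 'I_n -> 'rV[R]_m) : 'M[R]_n :=
  (Pol0 R n + \sum_(a < n) << zeta x a >>)%MS.

(* Span of the pointwise products f g, f in rowspace A, g in rowspace B
   (spanned by the products of spanning rows, by bilinearity). *)
Definition PolMul (R : fieldType) (n : nat) (A B : 'M[R]_n) : 'M[R]_n :=
  (\sum_(i < n) \sum_(j < n) << pmul (row i A) (row j B) >>)%MS.

Fixpoint Pol (R : fieldType) (n m : nat) (x : 'I_n -> 'rV[R]_m) (k : nat)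
  : 'M[R]_n :=
  match k with
  | 0 => Pol0 R n
  | k'.+1 => match k' with
             | 0 => Pol1 x
             | _ => PolMul (Pol1 x) (Pol x k')
             end
  end.

(* Harm_0 = Pol_0, Harm_k = Pol_k \cap Pol_{k-1}^perp.  The orthogonal
   complement w.r.t. (f,g) = 1/n sum f g is the left kernel of A^T. *)
Definition Harm (R : fieldType) (n m : nat) (x : 'I_n -> 'rV[R]_m) (k : nat)
  : 'M[R]_n :=
  match k with
  | 0 => Pol0 R n
  | k'.+1 => (Pol x k'.+1 :&: kermx (Pol x k')^T)%MS
  end.

(* Matrix (acting on column functions, (Mf)(x) = sum_y M x y f y) of the
   orthogonal projection onto the row space of H: projection onto H along
   its orthogonal complement. proj_mx acts by right multiplication on rows,
   hence the transpose. *)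
Definition orth_proj (R : fieldType) (n : nat) (H : 'M[R]_n) : 'M[R]_n :=
  (proj_mx H (kermx H^T))^T.

Definition Fmx (R : fieldType) (n m : nat) (x : 'I_n -> 'rV[R]_m) (i : nat)
  : 'M[R]_n := orth_proj (Harm x i).

Definition Gram (R : fieldType) (n m : nat) (x : 'I_n -> 'rV[R]_m) : 'M[R]_n :=
  \matrix_(i, j) (n%:R^-1 * dotv (x i) (x j)).

(* spherical 2-design, in the equivalent form given in the paper *)
Definition is_2design (R : fieldType) (n m : nat) (x : 'I_n -> 'rV[R]_m) : Prop :=
  (forall i, \sum_(j < n) dotv (x i) (x j) = 0) /\
  (forall i j, n%:R^-1 * (\sum_(k < n) dotv (x i) (x k) * dotv (x k) (x j))
               = dotv (x i) (x j)).

(* Main.v *)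
Require Import Defs.
From HB Require Import structures.
From mathcomp Require Import all_boot all_order all_algebra.
Import Order.TTheory GRing.Theory Num.Theory.
Local Open Scope ring_scope.

Lemma cap_ker0 (R : realFieldType) n (H : 'M[R]_n) : (H :&: kermx H^T = 0)%MS.
Proof.
apply/eqP; rewrite -submx0; apply/rV_subP => u; rewrite sub_capmx submx0.
case/andP => uH /sub_kermxP uK.
have e : u *m u^T = 0.
  by case/submxP: uH uK => D -> uK; rewrite trmx_mul mulmxA uK mul0mx.
apply/eqP/rowP => k; rewrite mxE.
have := congr1 (fun M : 'M_1 => M 0 0) e; rewrite !mxE => /eqP.
rewrite psumr_eq0; last by move=> i _; rewrite !mxE -expr2 sqr_ge0.
move/allP/(_ k (mem_index_enum _)); rewrite !mxE /= mulf_eq0 orbb.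
by move/eqP.
Qed.

Lemma orth_proj_eq (R : realFieldType) n (H P : 'M[R]_n) :
  P^T = P -> P *m P = P -> (H <= P)%MS -> (P <= H)%MS -> orth_proj H = P.
Proof.
move=> PT PP HP PH; rewrite /orth_proj -PT; congr trmx.
rewrite -[proj_mx _ _]mul1mx -(subrK P 1%:M) mulmxDl.
rewrite (proj_mx_id (@cap_ker0 _ _ H) PH) proj_mx_0 ?cap_ker0 ?add0r //.
apply/sub_kermxP; case/submxP: HP => D ->.
by rewrite trmx_mul PT mulmxA mulmxBl PP mul1mx subrr mul0mx.
Qed.

From mathcomp Require Import ring.

Theorem lemma3p3 (R : realFieldType) (m n : nat) (x : 'I_n -> 'rV[R]_m) :
  (1 <= m)%N ->
  injective x ->
  (forall i, dotv (x i) (x i) = m%:R) ->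
  is_2design x ->
  Fmx x 0 = n%:R^-1 *: const_mx 1 /\ Fmx x 1 = Gram x.
Proof.
move=> _ _ _ [D1 D2].
case: n x D1 D2 => [|n] x D1 D2; first by split; apply/matrixP => -[].
have nz : (n.+1%:R : R) != 0 by rewrite pnatr_eq0.
set c := (n.+1%:R : R)^-1.
set c1 := (const_mx 1 : 'rV[R]_n.+1).
split.
  rewrite /Fmx; apply: orth_proj_eq.
  - by apply/matrixP => i j; rewrite !mxE.
  - apply/matrixP => i j; rewrite !mxE.
    under eq_bigr do rewrite !mxE.
    by rewrite sumr_const card_ord -mulr_natr /c !mulr1 -mulrA mulVf // mulr1.
  - rewrite /Harm /Pol0 genmxE -/c1.
    have -> : c1 = n.+1%:R *: row 0 (c *: (const_mx 1 : 'M_n.+1)).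
      by apply/rowP => j; rewrite !mxE /c mulr1 mulfV.
    by rewrite scalemx_sub // row_sub.
  - rewrite /Harm /Pol0 genmxE -/c1; apply/row_subP => i.
    have -> : row i (c *: (const_mx 1 : 'M_n.+1)) = c *: c1.
      by apply/rowP => j; rewrite !mxE.
    by rewrite scalemx_sub.
have rowG : forall i, row i (Gram x) = c *: zeta x i.
  by move=> i; apply/rowP => j; rewrite !mxE.
have Gc1 : Gram x *m c1^T = 0.
  apply/matrixP => i j; rewrite !mxE.
  under eq_bigr do rewrite !mxE mulr1.
  by rewrite -mulr_sumr D1 mulr0.
have Pol0c1 : (Pol0 R n.+1 <= c1)%MS by rewrite /Pol0 genmxE.
have c1Pol0 : (c1 <= Pol0 R n.+1)%MS by rewrite /Pol0 genmxE.
have zG : forall a, (zeta x a <= Gram x)%MS.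
  move=> a; have -> : zeta x a = n.+1%:R *: row a (Gram x).
    by rewrite rowG scalerA mulfV // scale1r.
  by rewrite scalemx_sub // row_sub.
rewrite /Fmx; have -> : Harm x 1 = (Pol1 x :&: kermx (Pol0 R n.+1)^T)%MS by [].
rewrite /Fmx; apply: orth_proj_eq.
- apply/matrixP => i j; rewrite !mxE /dotv; congr (_ * _).
  by apply: eq_bigr => k _; rewrite mulrC.
- apply/matrixP => i j; rewrite !mxE -D2 mulr_sumr mulr_sumr.
  by apply: eq_bigr => k _; rewrite !mxE; ring.
- apply/rV_subP => u; rewrite sub_capmx => /andP[u1 /sub_kermxP uK].
  case/sub_addsmxP: u1 => [[a b]] /= eu.
  have zP : (b *m (\sum_(a0 < n.+1) << zeta x a0 >>)%MS <= Gram x)%MS.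
    apply: submx_trans (submxMl _ _) _; apply/sumsmx_subP => a0 _.
    by rewrite genmxE.
  have : (a *m Pol0 R n.+1 <= c1)%MS by apply: submx_trans (submxMl _ _) Pol0c1.
  case/submxP => e ee.
  have zc : b *m (\sum_(a0 < n.+1) << zeta x a0 >>)%MS *m c1^T = 0.
    by case/submxP: zP => F ->; rewrite -mulmxA Gc1 mulmx0.
  have uc : u *m c1^T = 0.
    by case/submxP: c1Pol0 => E ->; rewrite trmx_mul mulmxA uK mul0mx.
  have e0 : e = 0.
    have := congr1 (fun M : 'M_1 => M 0 0) uc.
    rewrite eu mulmxDl zc addr0 ee !mxE.
    under eq_bigr do rewrite !mxE big_ord1 !mxE !mulr1.
    rewrite sumr_const card_ord -mulr_natr => /eqP; rewrite mulf_eq0 (negbTE nz) orbF.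
    by move/eqP => e00; apply/matrixP => i j; rewrite !ord1 e00 mxE.
  by rewrite eu ee e0 mul0mx add0r.
- rewrite sub_capmx; apply/andP; split.
  + apply/row_subP => i; rewrite rowG scalemx_sub //= /Pol1.
    apply: submx_trans (addsmxSr _ _); apply: (sumsmx_sup i) => //.
    by rewrite genmxE.
  + apply/sub_kermxP; case/submxP: Pol0c1 => E ->.
    by rewrite trmx_mul mulmxA Gc1 mul0mx.
Qed.
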